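(* Let $Y_1,\dots,Y_n$ be independent with $Y_i\sim\mathcal N(\mu_i,\sigma^2)$, known $\sigma>0$, and $\mu_1\le\dots\le\mu_n$. Let $1-\alpha\in(0,1)$, $\mathcal J^{full}=\{(j,k)\in\{1,\dots,n\}^2:j\le k\}$ and $\delta=\alpha/(2|\mathcal J^{full}|)=\alpha/(n^2+n)$. Define $$L^\alpha_{\mathbf Y,i}=\sup_{(j,k)\in\mathcal J^{full}:\mu_i\ge\mu_k}\Big(Z_{j:k}-\frac{\sigma\,\Phi^{-1}(1-\delta)}{\sqrt{k-j+1}}\Big),\quad U^\alpha_{\mathbf Y,i}=\inf_{(j,k)\in\mathcal J^{full}:\mu_i\le\mu_j}\Big(Z_{j:k}-\frac{\sigma\,\Phi^{-1}(\delta)}{\sqrt{k-j+1}}\Big),$$ with $Z_{j:k}=\frac1{k-j+1}\sum_{i=j}^kY_i$, and the Yang--Barber bounds $$L^{\alpha,YB}_{\mathbf Y,i}=\sup_{(j,k)\in\mathcal J^{full}:\mu_i\ge\mu_k}\Big(Z^{Iso}_{j:k}-\frac{\sqrt{2\sigma^2\log(1/\delta)}}{\sqrt{k-j+1}}\Big),\quad U^{\alpha,YB}_{\mathbf Y,i}=\inf_{(j,k)\in\mathcal J^{full}:\mu_i\le\mu_j}\Big(Z^{Iso}_{j:k}+\frac{\sqrt{2\sigma^2\log(1/\delta)}}{\sqrt{k-j+1}}\Big),$$ with $Z^{Iso}_{j:k}=\frac1{k-j+1}\sum_{i=j}^k\widehat\mu^{Iso}_i$. Then $L^\alpha_{\mathbf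 Y,i}\ge L^{\alpha,YB}_{\mathbf Y,i}$ and $U^\alpha_{\mathbf Y,i}\le U^{\alpha,YB}_{\mathbf Y,i}$ for all $1\le i\le n$.
   Context: $\Phi^{-1}(\delta)$ is the $\delta$-quantile of the standard normal distribution. $\widehat{\boldsymbol\mu}^{Iso}=(\widehat\mu^{Iso}_1,\dots,\widehat\mu^{Iso}_n)$ is the (unweighted) isotonic regression of $\mathbf Y$: the minimizer of $\sum_{i=1}^n(Y_i-m_i)^2$ over $\mathbf m\in\mathbb R^n$ with $m_1\le\dots\le m_n$. (The bounds $L^\alpha,U^\alpha$ are those of the paper's normal-case calibration band with volumes $v_i=1$ and dispersion $\varphi=\sigma^2$.) *)

(* Defs.v *)
From HB Require Import structures.
From mathcomp Require Import all_boot all_order all_algebra.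
From mathcomp Require Import all_classical all_reals all_analysis.
Set Implicit Arguments. Unset Strict Implicit. Unset Printing Implicit Defensive.
Import Order.TTheory GRing.Theory Num.Theory.
Local Open Scope classical_set_scope.
Local Open Scope ring_scope.

Section Defs.
Variables (R : realType) (n : nat).

Definition std_normal_cdf (x : R) : R := fine (normal_prob 0 1 `]-oo, x]).

Definition std_normal_quantile (d : R) : R := inf [set x | d <= std_normal_cdf x].

Definition nondecr (m : 'I_n -> R) : Prop :=
  forall i j : 'I_n, (i <= j)%N -> m i <= m j.

Definition blockmean (v : 'I_n -> R) (j k : 'I_n) : R :=
  (\sum_(l < n | (j <= l <= k)%N) v l) / (k - j + 1)%:R.

Definition is_isoreg (y m : 'I_n -> R) : Prop :=
  nondecr m /\
  forall m' : 'I_n -> R, nondecr m' ->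
    \sum_(l < n) (y l - m l) ^+ 2 <= \sum_(l < n) (y l - m' l) ^+ 2.

Definition delta (alpha : R) : R := alpha / (n ^ 2 + n)%:R.

Definition Jfull : set ('I_n * 'I_n) := [set p : 'I_n * 'I_n | (p.1 <= p.2)%N].

Definition width (p : 'I_n * 'I_n) : R := Num.sqrt (p.2 - p.1 + 1)%:R.

Definition L_band (y mu : 'I_n -> R) (sigma alpha : R) (i : 'I_n) : R :=
  sup [set blockmean y p.1 p.2
              - sigma * std_normal_quantile (1 - delta alpha) / width p
      | p in Jfull `&` [set p : 'I_n * 'I_n | mu p.2 <= mu i]].

Definition U_band (y mu : 'I_n -> R) (sigma alpha : R) (i : 'I_n) : R :=
  inf [set blockmean y p.1 p.2
              - sigma * std_normal_quantile (delta alpha) / width p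
      | p in Jfull `&` [set p : 'I_n * 'I_n | mu i <= mu p.1]].

Definition L_YB (muiso mu : 'I_n -> R) (sigma alpha : R) (i : 'I_n) : R :=
  sup [set blockmean muiso p.1 p.2
              - Num.sqrt (2 * sigma ^+ 2 * ln (delta alpha)^-1) / width p
      | p in Jfull `&` [set p : 'I_n * 'I_n | mu p.2 <= mu i]].

Definition U_YB (muiso mu : 'I_n -> R) (sigma alpha : R) (i : 'I_n) : R :=
  inf [set blockmean muiso p.1 p.2
              + Num.sqrt (2 * sigma ^+ 2 * ln (delta alpha)^-1) / width p
      | p in Jfull `&` [set p : 'I_n * 'I_n | mu i <= mu p.1]].

End Defs.

(* Main.v *)
Require Import Defs.
From HB Require Import structures.
From mathcomp Require Import all_boot all_order all_algebra.
From mathcomp Require Import all_classical all_reals all_analysis.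
From mathcomp Require Import measurable_realfun ring lra zify.
Import Order.TTheory GRing.Theory Num.Theory.
Set Implicit Arguments. Unset Strict Implicit. Unset Printing Implicit Defensive.
Local Open Scope ring_scope.

Lemma perturbL (R : realType) n (y m : 'I_n -> R) (a k : 'I_n) : is_isoreg y m ->
  (forall l : 'I_n, (l < a)%N -> m l < m a) -> (a <= k)%N ->
  \sum_(l < n | (a <= l <= k)%N) m l <= \sum_(l < n | (a <= l <= k)%N) y l.
Proof.
case=> mmono mopt hlt ak.
set P := fun l : 'I_n => (a <= l <= k)%N.
rewrite -subr_ge0 -sumrB. set Sg := \sum_(l < n | P l) (y l - m l).
rewrite leNgt; apply/negP => Sneg.
have [e0 [e0pos e0P]] : exists e0 : R, 0 < e0 /\ forall l : 'I_n, (l < a)%N -> m l <= m a - e0.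
  case ha: (nat_of_ord a) => [|a1].
    by exists 1; split => // l.
  have a1n : (a1 < n)%N by rewrite (leq_trans _ (ltn_ord a)) // ha.
  pose o := Ordinal a1n.
  exists (m a - m o); split.
    by rewrite subr_gt0; apply: hlt; rewrite /= ha.
  move=> l; rewrite ltnS => la1.
  by rewrite opprB addrC subrK; apply: mmono.
set c := \sum_(l < n | P l) (1 : R).
have c0 : 0 <= c by apply: sumr_ge0.
set e := Order.min e0 (- Sg / (c + 1)).
have c1 : 0 < c + 1 by lra.
have epos : 0 < e by rewrite lt_min e0pos /= divr_gt0 // oppr_gt0.
have ee0 : e <= e0 by rewrite ge_min lexx.
have he : e * (c + 1) <= - Sg by rewrite -ler_pdivlMr // ge_min lexx orbT.
pose m' := fun l => m l - (if P l then e else 0).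
have m'mono : nondecr m'.
  move=> i j ij; rewrite /m'; case: (boolP (P i)) => Pi; case: (boolP (P j)) => Pj.
  - by rewrite lerD2r; apply: mmono.
  - by rewrite subr0 (le_trans _ (mmono _ _ ij)) // gerDl oppr_le0 ltW.
  - have ia : (i < a)%N.
      move: Pj Pi; rewrite /P; case/andP => aj jk.
      rewrite ltnNge; apply: contra => ai; rewrite ai /=; exact: leq_trans ij jk.
    rewrite subr0; apply: (le_trans (e0P _ ia)); apply: lerB; last exact: ee0.
    by apply: mmono; move: Pj => /andP[].
  - by rewrite !subr0; apply: mmono.
have opt := mopt m' m'mono.
have E : \sum_(l < n) (y l - m' l) ^+ 2 =
   \sum_(l < n) (y l - m l) ^+ 2 + \sum_(l < n | P l) (2 * e * (y l - m l) + e ^+ 2).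
  rewrite [X in _ = _ + X]big_mkcond -big_split; apply: eq_bigr => l _ /=.
  by rewrite /m'; case: ifP => _; ring.
have E2 : \sum_(l < n | P l) (2 * e * (y l - m l) + e ^+ 2) = 2 * e * Sg + e ^+ 2 * c.
  rewrite big_split /= !mulr_sumr; congr (_ + _); apply: eq_bigr => l _; by rewrite mulr1.
move: opt; rewrite E E2 -lerBlDl subrr => h0.
have : 2 * e * Sg + e ^+ 2 * c < 0.
  have h2 : e * c <= - Sg - e by lra.
  have h3 : e * (e * c) <= e * (- Sg - e) by rewrite ler_pM2l.
  nra.
by rewrite ltNge h0.
Qed.

Lemma quad (R : realType) (D C wa wj wb : R) : 0 <= D -> wa <= wj -> wj <= wb ->
  D * wj ^+ 2 - C * wj <= D * wa ^+ 2 - C * wa \/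
  D * wj ^+ 2 - C * wj <= D * wb ^+ 2 - C * wb.
Proof.
move=> D0 h1 h2.
have [hc|hc] := lerP C (D * (wj + wa)).
  right.
  have e : D * wb ^+ 2 - C * wb - (D * wj ^+ 2 - C * wj) = (wb - wj) * (D * (wb + wj) - C) by ring.
  rewrite -subr_ge0 e; apply: mulr_ge0; first by rewrite subr_ge0.
  rewrite subr_ge0; apply: le_trans hc _; apply: ler_wpM2l => //; lra.
left.
have e : D * wa ^+ 2 - C * wa - (D * wj ^+ 2 - C * wj) = (wj - wa) * (C - D * (wj + wa)) by ring.
rewrite -subr_ge0 e; apply: mulr_ge0; first by rewrite subr_ge0.
by rewrite subr_ge0 ltW.
Qed.

Definition SS (R : realType) (F : nat -> R) (a k : nat) := \sum_(a <= l < k.+1) F l.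

Lemma S_split (R : realType) (F : nat -> R) a b k : (a <= b <= k.+1)%N ->
  SS F a k = \sum_(a <= l < b) F l + SS F b k.
Proof. by move=> h; rewrite /SS (big_cat_nat _ (n:=b)) //; case/andP: h. Qed.

Lemma S_const (R : realType) (F : nat -> R) a b c : (forall l, (a <= l < b)%N -> F l = c) ->
  \sum_(a <= l < b) F l = c *+ (b - a).
Proof.
move=> h; rewrite (eq_big_nat _ _ h) sumr_const_nat //.
Qed.

Lemma inv_sqrt_le (R : realType) (p q : nat) : (0 < p)%N -> (p <= q)%N ->
  (Num.sqrt (q%:R : R))^-1 <= (Num.sqrt (p%:R : R))^-1.
Proof.
move=> p0 pq.
have hp : (0 : R) < Num.sqrt p%:R by rewrite sqrtr_gt0 ltr0n.
have hq : (0 : R) < Num.sqrt q%:R by rewrite sqrtr_gt0 ltr0n; apply: leq_trans pq.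
rewrite lef_pV2 ?posrE // ler_sqrt ?ler_nat //.
Qed.

Lemma meanform (R : realType) (Ssum v D C : R) (p : nat) : (0 < p)%N ->
  Ssum = v * p%:R + D ->
  Ssum / p%:R - C / Num.sqrt p%:R =
  v + D * (Num.sqrt (p%:R : R))^-1 ^+ 2 - C * (Num.sqrt (p%:R : R))^-1.
Proof.
move=> p0 ->; rewrite exprVn sqr_sqrtr ?ler0n //.
have hp : (p%:R : R) != 0 by rewrite pnatr_eq0 -lt0n.
by rewrite mulrDl mulfK.
Qed.

Lemma coreL (R : realType) (Y M : nat -> R) (C : R) (j k : nat) :
  0 <= C -> (j <= k)%N ->
  (forall l1 l2, (l1 <= l2 <= k)%N -> M l1 <= M l2) ->
  (forall a, (a <= k)%N -> (forall l, (l < a)%N -> M l < M a) -> SS M a k <= SS Y a k) ->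
  exists a, (a <= k)%N /\
    SS M j k / (k - j + 1)%:R - C / Num.sqrt (k - j + 1)%:R <=
    SS Y a k / (k - a + 1)%:R - C / Num.sqrt (k - a + 1)%:R.
Proof.
move=> C0 jk mono bs.
set v := M j.
have exa : exists l, M l == v by exists j.
case: (ex_minnP exa) => a /eqP Ma amin.
have aj : (a <= j)%N by apply: amin.
have ak : (a <= k)%N by apply: leq_trans jk.
have Mlt : forall l, (l < a)%N -> M l < M a.
  move=> l la; rewrite lt_neqAle Ma; apply/andP; split.
    by apply/negP => /amin; rewrite leqNgt la.
  by apply: mono; rewrite jk andbT; apply: leq_trans (ltnW la) aj.
have Hbsa := bs a ak Mlt.
have Mconst : forall l, (a <= l <= j)%N -> M l = v.
  move=> l /andP[al lj]; apply: le_anti; apply/andP; split.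
    by apply: mono; rewrite lj; apply: leq_trans jk.
  by rewrite -Ma; apply: mono; rewrite al /=; apply: leq_trans jk.
have Lpos : forall x, (0 < k - x + 1)%N by move=> x; rewrite addn1.
case: (pselect (exists l, (j < l <= k)%N && (M l != v))) => [ex|nex].
- case: (ex_minnP ex) => b /andP[/andP[jb bk] Mbv] bmin.
  have Mb : v < M b.
    rewrite lt_neqAle eq_sym Mbv /=; apply: mono; rewrite bk andbT; exact: ltnW.
  have Mconst2 : forall l, (a <= l < b)%N -> M l = v.
    move=> l /andP[al lb]; have [lj|jl] := leqP l j; first by apply: Mconst; rewrite al lj.
    case: (eqVneq (M l) v) => // hne.
    have : (b <= l)%N by apply: bmin; rewrite jl hne andbT; apply: leq_trans (ltnW lb) bk.
    by rewrite leqNgt lb.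
  have Mltb : forall l, (l < b)%N -> M l < M b.
    move=> l lb; have [la|al] := ltnP l a.
      by apply: lt_trans (Mlt l la) _; rewrite Ma.
    by rewrite Mconst2 // al lb.
  have Hbsb := bs b bk Mltb.
  set D := SS M b k - v *+ (k.+1 - b).
  have D0 : 0 <= D.
    rewrite subr_ge0 /SS -sumr_const_nat; apply: ler_sum_nat => l /andP[bl lk].
    apply: ltW; apply: lt_le_trans Mb _; apply: mono; rewrite bl; by rewrite -ltnS.
  have SMx : forall x, (a <= x <= b)%N -> SS M x k = v * (k - x + 1)%:R + D.
    move=> x /andP[ax xb].
    rewrite (@S_split _ _ x b) ?xb //=; last by apply: leq_trans bk _.
    rewrite (@S_const _ _ x b v); last first.
      move=> l /andP[xl lb]; apply: Mconst2; rewrite lb andbT; exact: leq_trans xl.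
    rewrite /D mulr_natr.
    have -> : (k - x + 1 = (b - x) + (k.+1 - b))%N by lia.
    rewrite mulrnDr; lra.

  set w := fun x : nat => (Num.sqrt ((k - x + 1)%:R : R))^-1.
  have Ej : SS M j k / (k - j + 1)%:R - C / Num.sqrt (k - j + 1)%:R =
            v + D * w j ^+ 2 - C * w j.
    by apply: meanform => //; apply: SMx; rewrite aj; exact: ltnW.
  have Ex : forall x, (a <= x <= b)%N -> SS M x k <= SS Y x k ->
     v + D * w x ^+ 2 - C * w x <= SS Y x k / (k - x + 1)%:R - C / Num.sqrt (k - x + 1)%:R.
    move=> x hx hY; rewrite -(meanform C (Lpos x) (SMx x hx)).
    by rewrite lerD2r ler_wpM2r ?invr_ge0 ?ler0n.
  have wa : w a <= w j by apply: inv_sqrt_le => //; lia.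
  have wb : w j <= w b by apply: inv_sqrt_le => //; lia.
  case: (quad C D0 wa wb) => h; [exists a | exists b]; (split; [lia|]); rewrite Ej.
    by apply: le_trans (Ex a _ Hbsa); [lra | rewrite leqnn /= (leq_trans aj (ltnW jb))].
  by apply: le_trans (Ex b _ Hbsb); [lra | rewrite leqnn andbT (leq_trans aj (ltnW jb))].
- have Mc : forall l, (a <= l < k.+1)%N -> M l = v.
    move=> l /andP[al lk]; have [lj|jl] := leqP l j; first by apply: Mconst; rewrite al lj.
    case: (eqVneq (M l) v) => // hne; exfalso; apply: nex; exists l; rewrite jl hne andbT; by [].
    
  have SMx : forall x, (a <= x <= k)%N -> SS M x k = v * (k - x + 1)%:R + 0.
    move=> x /andP[ax xk]; rewrite addr0 /SS (@S_const _ _ x k.+1 v).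
      by rewrite mulr_natr; congr (_ *+ _); lia.
    move=> l /andP[xl lk]; apply: Mc; rewrite lk andbT; exact: leq_trans xl.
  exists a; split => //.
  rewrite (meanform C (Lpos j) (SMx j _)); last by rewrite aj jk.
  apply: (@le_trans _ _ (SS M a k / (k - a + 1)%:R - C / Num.sqrt (k - a + 1)%:R)); last first.
    by rewrite lerD2r ler_wpM2r ?invr_ge0 ?ler0n.
  rewrite (meanform C (Lpos a) (SMx a _)); last by rewrite leqnn ak.
  rewrite !mul0r !addr0 lerD2l lerN2; apply: ler_wpM2l => //.
  by apply: inv_sqrt_le => //; lia.
Qed.

Definition ext (R : realType) n (v : 'I_n -> R) (l : nat) : R := oapp v 0 (insub l).

Lemma ext_ord (R : realType) n (v : 'I_n -> R) (i : 'I_n) : ext v i = v i.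
Proof. by rewrite /ext valK. Qed.

Lemma sum_nat_range (R : realType) (F : nat -> R) n j k : (k < n)%N ->
  \sum_(0 <= l < n | (j <= l <= k)%N) F l = SS F j k.
Proof.
move=> kn.
rewrite (big_cat_nat _ (n := k.+1)) //=.
have h0 : \sum_(k.+1 <= l < n | (j <= l <= k)%N) F l = 0.
  rewrite big_nat_cond big_pred0 // => i /=.
  by lia.
rewrite h0 addr0.
case: (leqP j k.+1) => [jk|kj]; last first.
  rewrite big_nat_cond big_pred0 /SS; last first.
    by move=> i /=; lia.
  by rewrite big_geq //; exact: ltnW.
rewrite (big_cat_nat _ (n := j)) //=.
have h1 : \sum_(0 <= l < j | (j <= l <= k)%N) F l = 0.
  rewrite big_nat_cond big_pred0 // => i /=.
  by lia.
rewrite h1 add0r.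
rewrite /SS big_nat_cond [RHS]big_nat_cond; apply: eq_bigl => i /=.
by lia.
Qed.

Lemma sum_conv (R : realType) n (v : 'I_n -> R) (j k : 'I_n) :
  \sum_(l < n | (j <= l <= k)%N) v l = SS (ext v) j k.
Proof.
rewrite (eq_bigr (fun l : 'I_n => ext v l)); last by move=> l _; rewrite ext_ord.
by rewrite -(big_mkord (fun l => (j <= l <= k)%N) (ext v)) sum_nat_range.
Qed.

Lemma KeyL (R : realType) n (y m : 'I_n -> R) (C : R) (j k : 'I_n) :
  is_isoreg y m -> 0 <= C -> (j <= k)%N ->
  exists a : 'I_n, (a <= k)%N /\
    blockmean m j k - C / width R (j, k) <= blockmean y a k - C / width R (a, k).
Proof.
move=> iso C0 jk.
have mono : forall l1 l2, (l1 <= l2 <= k)%N -> ext m l1 <= ext m l2.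
  move=> l1 l2 /andP[h12 h2k].
  have l2n : (l2 < n)%N := leq_ltn_trans h2k (ltn_ord k).
  have l1n : (l1 < n)%N := leq_ltn_trans h12 l2n.
  rewrite -[l1]/(nat_of_ord (Ordinal l1n)) -[l2]/(nat_of_ord (Ordinal l2n)) !ext_ord.
  by apply: iso.1.
have bs : forall a, (a <= k)%N -> (forall l, (l < a)%N -> ext m l < ext m a) ->
    SS (ext m) a k <= SS (ext y) a k.
  move=> a ak hlt.
  have an : (a < n)%N := leq_ltn_trans ak (ltn_ord k).
  have := @perturbL R n y m (Ordinal an) k iso _ ak; rewrite !sum_conv; apply.
  move=> l la; have := hlt l la.
  by rewrite -[a]/(nat_of_ord (Ordinal an)) !ext_ord.
have [a [ak h]] := coreL C0 jk mono bs.
have an : (a < n)%N := leq_ltn_trans ak (ltn_ord k).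
exists (Ordinal an); split => //.
by rewrite /blockmean !sum_conv /width /=.
Qed.

Lemma iso_rev (R : realType) n (y m : 'I_n -> R) : is_isoreg y m ->
  is_isoreg (fun l => - y (rev_ord l)) (fun l => - m (rev_ord l)).
Proof.
case=> mono opt; split.
  move=> i j ij; rewrite lerN2; apply: mono => /=.
  have := ltn_ord i; have := ltn_ord j; lia.
move=> m'' mono''.
pose m' := fun l => - m'' (rev_ord l).
have mono' : nondecr m'.
  move=> i j ij; rewrite /m' lerN2; apply: mono'' => /=.
  have := ltn_ord i; have := ltn_ord j; lia.
have := opt m' mono'.
rewrite [X in X <= _](reindex_inj rev_ord_inj) [X in _ <= X](reindex_inj rev_ord_inj) /=.
have E1 : forall l, (y (rev_ord l) - m (rev_ord l)) ^+ 2 = (- y (rev_ord l) - - m (rev_ord l)) ^+ 2.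
  by move=> l; ring.
have E2 : forall l, (y (rev_ord l) - m' (rev_ord l)) ^+ 2 = (- y (rev_ord l) - m'' l) ^+ 2.
  by move=> l; rewrite /m' rev_ordK; ring.
by rewrite (eq_bigr _ (fun l _ => E1 l)) (eq_bigr _ (fun l _ => E2 l)).
Qed.

Lemma bm_rev (R : realType) n (v : 'I_n -> R) (a b : 'I_n) :
  blockmean (fun l => - v (rev_ord l)) a b = - blockmean v (rev_ord b) (rev_ord a).
Proof.
rewrite /blockmean -mulNr; congr (_ * _^-1); last first.
  congr (_%:R) => /=; have := ltn_ord a; have := ltn_ord b; lia.
rewrite [in RHS](reindex_inj rev_ord_inj) /= -sumrN; apply: eq_bigl => l /=.
have := ltn_ord a; have := ltn_ord b; have := ltn_ord l; lia.
Qed.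

Lemma width_rev (R : realType) n (a b : 'I_n) :
  width R (a, b) = width R (rev_ord b, rev_ord a).
Proof.
rewrite /width /=; congr (Num.sqrt _%:R).
have := ltn_ord a; have := ltn_ord b; lia.
Qed.

Lemma KeyU (R : realType) n (y m : 'I_n -> R) (C : R) (j k : 'I_n) :
  is_isoreg y m -> 0 <= C -> (j <= k)%N ->
  exists b : 'I_n, (j <= b)%N /\
    blockmean y j b + C / width R (j, b) <= blockmean m j k + C / width R (j, k).
Proof.
move=> iso C0 jk.
have jk' : (rev_ord k <= rev_ord j)%N.
  rewrite /=; have := ltn_ord k; lia.
have [a [aj h]] := KeyL (iso_rev iso) C0 jk'.
exists (rev_ord a); split.
  move: aj => /=; have := ltn_ord j; have := ltn_ord a; lia.
move: h; rewrite !bm_rev !rev_ordK (width_rev _ (rev_ord k)) (width_rev _ a) !rev_ordK.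
lra.
Qed.

Local Open Scope classical_set_scope.
Local Open Scope ring_scope.

Lemma normal_tail (R : realType) (x : R) (A : set R) : measurable A ->
  (forall u, A u -> 0 <= x * (u - x)) ->
  (normal_prob 0 1 A <= (expR (- x ^+ 2 / 2))%:E)%E.
Proof.
move=> mA hA.
have h10 : (1 : R) != 0 by rewrite oner_eq0.
have pt : forall u, A u -> normal_pdf 0 1 u <= expR (- x ^+ 2 / 2) * normal_pdf x 1 u.
  move=> u /hA h; rewrite !normal_pdfE// mulrCA ler_wpM2l ?normal_peak_ge0//.
  rewrite /normal_fun -expRD ler_expR expr1n subr0.
  idtac.
  have -> : (1 *+ 2 : R) = 2 by [].
  rewrite -mulNr -mulrDl ler_pM2r ?invr_gt0 ?ltr0n//.
  nra.
apply: (@le_trans _ _ (\int[lebesgue_measure]_(u in A) ((expR (- x ^+ 2 / 2))%:E * (normal_pdf x 1 u)%:E))%E).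
  apply: ge0_le_integral => //.
  - by move=> u _; rewrite lee_fin normal_pdf_ge0.
  - apply/measurable_EFinP; apply: measurable_funTS; exact: measurable_normal_pdf.
  - apply: emeasurable_funM => //; apply/measurable_EFinP; apply: measurable_funTS; exact: measurable_normal_pdf.
rewrite ge0_integralZl_EFin//.
  - rewrite -[X in (_ <= X)%E]mule1 lee_pmul2l ?lte_fin ?expR_gt0//.
    exact: (@probability_le1 _ _ _ (normal_prob x 1)).
  - by move=> u _; rewrite lee_fin normal_pdf_ge0.
  - apply/measurable_EFinP; apply: measurable_funTS; exact: measurable_normal_pdf.
Qed.

Lemma Phi_left (R : realType) (x : R) : x <= 0 -> std_normal_cdf x <= expR (- x ^+ 2 / 2).
Proof.
move=> x0.
have h := @normal_tail R x `]-oo, x] (measurable_itv _).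
rewrite /std_normal_cdf.
have : (normal_prob 0 1 `]-oo, x] <= (expR (- x ^+ 2 / 2))%:E)%E.
  apply: h => u /=; rewrite in_itv /= => ux; nra.
case: (normal_prob 0 1 `]-oo, x]) => [r||] //=.
Qed.

Lemma Phi_right (R : realType) (t : R) : 0 <= t -> 1 - expR (- t ^+ 2 / 2) <= std_normal_cdf t.
Proof.
move=> t0.
have h : (normal_prob 0 1 `]t, +oo[ <= (expR (- t ^+ 2 / 2))%:E)%E.
  apply: normal_tail; first exact: measurable_itv.
  move=> u /=; rewrite in_itv /= andbT => ux; nra.
have hC := @probability_setC _ _ R (normal_prob 0 1) `]-oo, t] (measurable_itv _).
rewrite setCitvl in hC.
rewrite hC in h.
have le1 : (normal_prob 0 1 `]-oo, t] <= 1)%E.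
  exact: (@probability_le1 _ _ R (normal_prob 0 1) `]-oo, t] (measurable_itv _)).
rewrite /std_normal_cdf.
have ge0 : (0 <= normal_prob 0 1 `]-oo, t])%E by apply: measure_ge0.
have h' : (1 - normal_prob 0 1 `]-oo, t] <= (expR (- t ^+ 2 / 2))%:E)%E := h.
move: le1 ge0 h'.
case: (normal_prob 0 1 `]-oo, t]) => [r||] //= _ _.
rewrite -EFinB lee_fin; lra.
Qed.

Lemma quant (R : realType) (d : R) : 0 < d -> d <= 1/2 ->
  std_normal_quantile (1 - d) <= Num.sqrt (2 * ln d^-1) /\
  - Num.sqrt (2 * ln d^-1) <= std_normal_quantile d.
Proof.
move=> d0 dh.
set t := Num.sqrt (2 * ln d^-1).
have L0 : 0 <= ln d^-1.
  apply: ln_ge0; rewrite -[1]invr1 lef_pV2 ?posrE //; lra.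
have t0 : 0 <= t by apply: sqrtr_ge0.
have et : expR (- t ^+ 2 / 2) = d.
  have -> : - t ^+ 2 / 2 = ln d.
    rewrite /t sqr_sqrtr ?mulr_ge0 // lnV ?posrE //; lra.
  by rewrite lnK ?posrE.
have tail : forall x, x < - t -> std_normal_cdf x < d.
  move=> x hx.
  have x0 : x <= 0 by lra.
  apply: le_lt_trans (Phi_left x0) _; rewrite -et ltr_expR; nra.
have Pt := Phi_right t0; rewrite et in Pt.
split.
- have lb : has_lbound [set x | 1 - d <= std_normal_cdf x].
    exists (- t) => x /= hx; rewrite leNgt; apply/negP => /tail; lra.
  exact: (ge_inf lb) t Pt.
- apply: lb_le_inf; first by exists t => /=; lra.
  move=> x /= hx; rewrite leNgt; apply/negP => /tail; lra.
Qed.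

Lemma fin_ub (R : realType) (T : finType) (f : T -> R) (D : set T) :
  has_ubound [set f p | p in D].
Proof.
exists (\sum_p `|f p|) => _ [p _ <-].
apply: le_trans (ler_norm _) _.
rewrite (bigD1 p) //= lerDl; apply: sumr_ge0 => q _; exact: normr_ge0.
Qed.

Lemma fin_lb (R : realType) (T : finType) (f : T -> R) (D : set T) :
  has_lbound [set f p | p in D].
Proof.
exists (- \sum_p `|f p|) => _ [p _ <-].
have := lexx `|f p|; rewrite ler_norml => /andP[h1 _].
apply: le_trans h1; rewrite lerN2.
rewrite (bigD1 p) //= lerDl; apply: sumr_ge0 => q _; exact: normr_ge0.
Qed.

Lemma width_gt0 (R : realType) n (p : 'I_n * 'I_n) : 0 < width R p.
Proof. by rewrite /width sqrtr_gt0 ltr0n addn1. Qed.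

Theorem theorem5p4 (R : realType) (n : nat) (mu y muiso : 'I_n -> R)
  (sigma alpha : R) :
  0 < sigma -> 0 < 1 - alpha < 1 ->
  nondecr mu ->
  is_isoreg y muiso ->
  forall i : 'I_n,
    L_YB muiso mu sigma alpha i <= L_band y mu sigma alpha i /\
    U_band y mu sigma alpha i <= U_YB muiso mu sigma alpha i.
Proof.
move=> sig0 /andP[a0 a1] mumono iso i.
have al0 : 0 < alpha by lra.
have al1 : alpha < 1 by lra.
have n0 : (0 < n)%N := leq_ltn_trans (leq0n i) (ltn_ord i).
rewrite /L_YB /L_band /U_YB /U_band.
set d := delta _ alpha.
have N2 : (2 : R) <= (n ^ 2 + n)%:R by rewrite (ler_nat R 2); nia.
have d0 : 0 < d by rewrite /d /delta divr_gt0 //; lra.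
have dh : d <= 1/2.
  rewrite /d /delta ler_pdivrMr; last by lra.
  nra.
have [qU qL] := quant d0 dh.
set t := Num.sqrt (2 * ln d^-1) in qU qL.
have ct : Num.sqrt (2 * sigma ^+ 2 * ln d^-1) = sigma * t.
  have -> : 2 * sigma ^+ 2 * ln d^-1 = sigma ^+ 2 * (2 * ln d^-1) by ring.
  by rewrite sqrtrM ?sqr_ge0 // sqrtr_sqr gtr0_norm.
rewrite ct.
set qu := std_normal_quantile (1 - d) in qU *.
set ql := std_normal_quantile d in qL *.
have t0 : 0 <= t by apply: sqrtr_ge0.
set CU := Order.max (sigma * qu) 0.
set CL := Order.max (- (sigma * ql)) 0.
have CU0 : 0 <= CU by rewrite le_max lexx orbT.
have CL0 : 0 <= CL by rewrite le_max lexx orbT.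
have CUq : sigma * qu <= CU by rewrite le_max lexx.
have CLq : - (sigma * ql) <= CL by rewrite le_max lexx.
have CUt : CU <= sigma * t.
  rewrite ge_max; apply/andP; split; last by rewrite mulr_ge0 // ltW.
  by rewrite ler_wpM2l // ltW.
have CLt : CL <= sigma * t.
  rewrite ge_max; apply/andP; split; last by rewrite mulr_ge0 // ltW.
  nra.
split.
- apply: ge_sup.
    by exists (blockmean muiso i i - sigma * t / width R (i, i)); exists (i, i) => //=; split; rewrite /Jfull //=.
  move=> _ [[j k] [/= jk mk] <-] /=.
  have [a [ak h]] := KeyL iso CU0 jk.
  have wjk := width_gt0 R (j, k).
  have wak := width_gt0 R (a, k).
  apply: (@le_trans _ _ (blockmean y a k - sigma * qu / width R (a, k))).
    apply: le_trans _ (le_trans h _).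
      by rewrite lerD2l lerN2 ler_wpM2r // invr_ge0 ltW.
    by rewrite lerD2l lerN2 ler_wpM2r // invr_ge0 ltW.
  apply: sup_upper_bound.
    split; last exact: fin_ub.
    by exists (blockmean y i i - sigma * qu / width R (i, i)); exists (i, i) => //=; split; rewrite /Jfull //=.
  by exists (a, k) => //=; split => //=.
- apply: lb_le_inf.
    by exists (blockmean muiso i i + sigma * t / width R (i, i)); exists (i, i) => //=; split; rewrite /Jfull //=.
  move=> _ [[j k] [/= jk mj] <-] /=.
  have [b [jb h]] := KeyU iso CL0 jk.
  have wjk := width_gt0 R (j, k).
  have wjb := width_gt0 R (j, b).
  apply: (@le_trans _ _ (blockmean y j b - sigma * ql / width R (j, b))).
    apply: ge_inf; first exact: fin_lb.
    by exists (j, b) => //=; split => //=.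
  apply: le_trans _ (le_trans h _).
    by rewrite -mulNr lerD2l ler_wpM2r // invr_ge0 ltW.
  by rewrite lerD2l ler_wpM2r // invr_ge0 ltW.
Qed.
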